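(* For any $1\leq j<i<n$, the following equalities hold in $U^{\mathrm{rtt}}_v(L\mathfrak{gl}_n)$: $$\tilde e^\pm_{j,i+1}(z)=\frac{[\tilde e^{(0)}_{i,i+1},\tilde e^\pm_{ji}(z)]_{v^{-1}}}{v-v^{-1}},\qquad \tilde f^\pm_{i+1,j}(z)=\frac{[\tilde f^\pm_{ij}(z),\tilde f^{(0)}_{i+1,i}]_v}{v^{-1}-v}$$ (each for both signs $\pm$).
   Context: Let $v$ be a formal variable, $E_{ij}$ matrix units, $[a,b]_x=ab-x\,ba$. Let $R_{\mathrm{trig}}(z,w)=(vz-v^{-1}w)\sum_iE_{ii}\otimes E_{ii}+(z-w)\sum_{i\neq j}E_{ii}\otimes E_{jj}+(v-v^{-1})z\sum_{i<j}E_{ij}\otimes E_{ji}+(v-v^{-1})w\sum_{i>j}E_{ij}\otimes E_{ji}$. $\mathfrak{U}^{\mathrm{rtt}}_v(L\mathfrak{gl}_n)$ is the $\mathbb{C}[v,v^{-1}]$-algebra generated by $\{t^\pm_{ij}[\pm r]\}_{1\leq i,j\leq n}^{r\in\mathbb{N}}$ with relations $t^\pm_{ii}[0]t^\mp_{ii}[0]=1$; $t^+_{ij}[0]=t^-_{ji}[0]=0$ for $j<i$; $R_{\mathrm{trig}}(z,w)T^\epsilon_1(z)T^{\epsilon'}_2(w)=T^{\epsilon'}_2(w)T^\epsilon_1(z)R_{\mathrm{trig}}(z,w)$ for $(\epsilon,\epsilon')\in\{(+,+),(-,-),(-,+)\}$, where $T^\pm(z)=\sum_{i,j}t^\pm_{ij}(z)\otimes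 E_{ij}$, $t^\pm_{ij}(z)=\sum_{r\geq0}t^\pm_{ij}[\pm r]z^{\mp r}$. $U^{\mathrm{rtt}}_v(L\mathfrak{gl}_n)=\mathfrak{U}^{\mathrm{rtt}}_v(L\mathfrak{gl}_n)\otimes_{\mathbb{C}[v,v^{-1}]}\mathbb{C}(v)$. Gauss decomposition: $T^\pm(z)=\tilde F^\pm(z)\tilde G^\pm(z)\tilde E^\pm(z)$ with $\tilde F^\pm(z)=\sum_iE_{ii}+\sum_{i>j}\tilde f^\pm_{ij}(z)E_{ij}$, $\tilde G^\pm(z)=\sum_i\tilde g^\pm_i(z)E_{ii}$, $\tilde E^\pm(z)=\sum_iE_{ii}+\sum_{i<j}\tilde e^\pm_{ij}(z)E_{ij}$ (series in $z^{\mp1}$). Write $\tilde e^+_{ij}(z)=\sum_{r\geq0}\tilde e^{(r)}_{ij}z^{-r}$, $\tilde e^-_{ij}(z)=\sum_{r<0}\tilde e^{(r)}_{ij}z^{-r}$, $\tilde f^+_{ij}(z)=\sum_{r>0}\tilde f^{(r)}_{ij}z^{-r}$, $\tilde f^-_{ij}(z)=\sum_{r\leq0}\tilde f^{(r)}_{ij}z^{-r}$. *)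

(* Defs.v *)
From mathcomp Require Import all_boot all_order all_algebra.
From mathcomp Require Import complex Rstruct.
Set Implicit Arguments. Unset Strict Implicit. Unset Printing Implicit Defensive.
Import Order.TTheory GRing.Theory Num.Theory.
Local Open Scope ring_scope.

Definition Cnum : fieldType := complex Rdefinitions.R.
Definition Cv : fieldType := {fraction {poly Cnum}}.
Definition vq : Cv := FracField.tofrac ('X : {poly Cnum}).

Section RTT.
Variable K : fieldType.
Variable A : algType K.
Variable n : nat.

(* Entry of R_trig(z,w) at row (a,b), column (c,d) w.r.t. the basis
   E_ac (x) E_bd : returned as the pair (coefficient of z, coefficient of w). *)
Definition Rtrig_coef (v : K) (a b c d : 'I_n) : K * K :=
  if (a == c) && (b == d) then
    (if a == b then (v, - v^-1) else (1, -1))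
  else if (a == d) && (b == c) then
    (if (a < b)%N then (v - v^-1, 0) else (0, v - v^-1))
  else (0, 0).

(* A one-variable formal series, indexed by the integer exponent k of z^k. *)
(* T^+(z) = sum_{r>=0} t^+[r] z^{-r}; tp i j r := t^+_{ij}[r]. *)
Definition ser_plus (tp : 'I_n -> 'I_n -> nat -> A) : 'I_n -> 'I_n -> int -> A :=
  fun i j k => if (k <= 0)%R then tp i j `|k|%N else 0.
(* T^-(z) = sum_{r>=0} t^-[-r] z^{r}; tm i j r := t^-_{ij}[-r]. *)
Definition ser_minus (tm : 'I_n -> 'I_n -> nat -> A) : 'I_n -> 'I_n -> int -> A :=
  fun i j k => if (0 <= k)%R then tm i j `|k|%N else 0.

(* The relation R(z,w) T1_1(z) T2_2(w) = T2_2(w) T1_1(z) R(z,w), compared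
   coefficientwise at z^k w^l (entry ((a,b),(p,q))).  Multiplication by z
   shifts the z-exponent: [z X]_(k,l) = X_(k-1,l). *)
Definition RTT_rel (v : K) (T1 T2 : 'I_n -> 'I_n -> int -> A) : Prop :=
  forall (a b p q : 'I_n) (k l : int),
    \sum_(c < n) \sum_(d < n)
       ((Rtrig_coef v a b c d).1 *: (T1 c p (k - 1) * T2 d q l)
      + (Rtrig_coef v a b c d).2 *: (T1 c p k * T2 d q (l - 1)))
  = \sum_(c < n) \sum_(d < n)
       ((Rtrig_coef v c d p q).1 *: (T2 b d l * T1 a c (k - 1))
      + (Rtrig_coef v c d p q).2 *: (T2 b d (l - 1) * T1 a c k)).

(* The defining relations of U^rtt_v(Lgl_n) (over K, with parameter v),
   for generators tp i j r = t^+_{ij}[r], tm i j r = t^-_{ij}[-r]. *)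
Definition rtt_relations (v : K) (tp tm : 'I_n -> 'I_n -> nat -> A) : Prop :=
  [/\ (forall i, tp i i 0%N * tm i i 0%N = 1 /\ tm i i 0%N * tp i i 0%N = 1),
      (forall i j : 'I_n, (j < i)%N -> tp i j 0%N = 0 /\ tm j i 0%N = 0),
      RTT_rel v (ser_plus tp) (ser_plus tp),
      RTT_rel v (ser_minus tm) (ser_minus tm) &
      RTT_rel v (ser_minus tm) (ser_plus tp)].

(* Gauss decomposition T(z) = F(z) G(z) E(z) of a matrix of one-variable
   series, all indexed by r = the power of z^{-1} (for "+") or of z (for "-").
   f i j r (i > j) are the entries of F, g i r of G, e i j r (i < j) of E. *)
Definition Fmat (f : 'I_n -> 'I_n -> nat -> A) (i j : 'I_n) (r : nat) : A :=
  if (j < i)%N then f i j r else if i == j then (if r == 0%N then 1 else 0) else 0.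
Definition Emat (e : 'I_n -> 'I_n -> nat -> A) (i j : 'I_n) (r : nat) : A :=
  if (i < j)%N then e i j r else if i == j then (if r == 0%N then 1 else 0) else 0.

Definition gauss_decomp (t : 'I_n -> 'I_n -> nat -> A)
    (f : 'I_n -> 'I_n -> nat -> A) (g : 'I_n -> nat -> A)
    (e : 'I_n -> 'I_n -> nat -> A) : Prop :=
  forall (a b : 'I_n) (r : nat),
    t a b r = \sum_(c < n) \sum_(0 <= r1 < r.+1) \sum_(0 <= r2 < (r - r1).+1)
                 Fmat f a c r1 * g c r2 * Emat e c b (r - r1 - r2).

End RTT.

(* Main.v *)
Require Import Defs.
From mathcomp Require Import all_boot all_order all_algebra.
From mathcomp Require Import complex Rstruct.
Import Order.TTheory GRing.Theory Num.Theory.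
Local Open Scope ring_scope.
Set Implicit Arguments. Unset Strict Implicit. Unset Printing Implicit Defensive.
Definition commz (R : pzRingType) (z x : R) := x * z = z * x.

Lemma commz0 (R : pzRingType) (z : R) : commz z 0.
Proof. by rewrite /commz mul0r mulr0. Qed.
Lemma commz1 (R : pzRingType) (z : R) : commz z 1.
Proof. by rewrite /commz mul1r mulr1. Qed.
Lemma commzD (R : pzRingType) (z x y : R) : commz z x -> commz z y -> commz z (x + y).
Proof. by rewrite /commz mulrDl mulrDr => -> ->. Qed.
Lemma commzN (R : pzRingType) (z x : R) : commz z x -> commz z (- x).
Proof. by rewrite /commz mulNr mulrN => ->. Qed.
Lemma commzB (R : pzRingType) (z x y : R) : commz z x -> commz z y -> commz z (x - y).
Proof. by move=> hx hy; apply: commzD => //; apply: commzN. Qed.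
Lemma commzM (R : pzRingType) (z x y : R) : commz z x -> commz z y -> commz z (x * y).
Proof. by rewrite /commz => hx hy; rewrite -mulrA hy mulrA hx mulrA. Qed.
Lemma commz_sum (R : pzRingType) (z : R) (I : Type) (s : seq I) (P : pred I) (F : I -> R) :
  (forall i, P i -> commz z (F i)) -> commz z (\sum_(i <- s | P i) F i).
Proof.
move=> h; apply: (big_ind (commz z)) => //; [exact: commz0 | exact: commzD].
Qed.
Lemma commz_inv (R : pzRingType) (z x u : R) : u * x = 1 -> x * u = 1 -> commz z x -> commz z u.
Proof.
rewrite /commz => h1 h2 hx.
rewrite -[u * z]mulr1 -h2 !mulrA -[u * z * x]mulrA -hx mulrA h1 mul1r.
by [].
Qed.

Lemma sum_diagE (R : pzRingType) (P g E : nat -> R) (r : nat) :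
  (forall s, E s = if (s == 0)%N then 1 else 0) ->
  \sum_(0 <= r1 < r.+1) \sum_(0 <= r2 < (r - r1).+1) P r1 * g r2 * E (r - r1 - r2)%N
  = \sum_(0 <= r1 < r.+1) P r1 * g (r - r1)%N.
Proof.
move=> hE; apply: eq_bigr => r1 _.
rewrite big_nat_recr //= subnn hE eqxx mulr1 big1_seq ?add0r // => r2.
rewrite mem_index_iota => /andP[_ h].
by rewrite hE ifF ?mulr0 //; apply/negbTE; rewrite subn_eq0 -ltnNge.
Qed.

Lemma sum_diagF (R : pzRingType) (F g Q : nat -> R) (r : nat) :
  (forall s, F s = if (s == 0)%N then 1 else 0) ->
  \sum_(0 <= r1 < r.+1) \sum_(0 <= r2 < (r - r1).+1) F r1 * g r2 * Q (r - r1 - r2)%N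
  = \sum_(0 <= r2 < r.+1) g r2 * Q (r - r2)%N.
Proof.
move=> hF; rewrite big_nat_recl //.
rewrite [X in _ + X](_ : _ = 0) ?addr0.
  by rewrite subn0 hF; apply: eq_bigr => r2 _; rewrite mul1r ?subn0.
by apply: big1 => i _; apply: big1 => j _; rewrite hF mul0r mul0r.
Qed.

Lemma sum_delta_l (R : pzRingType) (P h : nat -> R) (r : nat) :
  (forall s, P s = if (s == 0)%N then 1 else 0) ->
  \sum_(0 <= r1 < r.+1) P r1 * h (r - r1)%N = h r.
Proof.
move=> hP; rewrite big_nat_recl // hP mul1r ?subn0 big1 ?addr0 // => i _.
by rewrite hP mul0r.
Qed.
Definition gterm (K : fieldType) (A : algType K) (n : nat)
  (F : 'I_n -> 'I_n -> nat -> A) (g : 'I_n -> nat -> A) (E : 'I_n -> 'I_n -> nat -> A)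
  (a b c : 'I_n) (r : nat) : A :=
  \sum_(0 <= r1 < r.+1) \sum_(0 <= r2 < (r - r1).+1)
     Fmat F a c r1 * g c r2 * Emat E c b (r - r1 - r2).

Lemma Fmat_diag (K : fieldType) (A : algType K) (n : nat) (F : 'I_n -> 'I_n -> nat -> A) k s :
  Fmat F k k s = if (s == 0)%N then 1 else 0.
Proof. by rewrite /Fmat ltnn eqxx. Qed.
Lemma Emat_diag (K : fieldType) (A : algType K) (n : nat) (E : 'I_n -> 'I_n -> nat -> A) k s :
  Emat E k k s = if (s == 0)%N then 1 else 0.
Proof. by rewrite /Emat ltnn eqxx. Qed.
Lemma Fmat_up (K : fieldType) (A : algType K) (n : nat) (F : 'I_n -> 'I_n -> nat -> A) (a c : 'I_n) s :
  (a < c)%N -> Fmat F a c s = 0.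
Proof.
move=> ac; rewrite /Fmat ltnNge ltnW //= ifF //; apply/negbTE.
by apply/eqP => e; rewrite e ltnn in ac.
Qed.
Lemma Emat_low (K : fieldType) (A : algType K) (n : nat) (E : 'I_n -> 'I_n -> nat -> A) (c b : 'I_n) s :
  (b < c)%N -> Emat E c b s = 0.
Proof.
move=> ac; rewrite /Emat ltnNge ltnW //= ifF //; apply/negbTE.
by apply/eqP => e; rewrite e ltnn in ac.
Qed.
Lemma Fmat_le_comm (K : fieldType) (A : algType K) (n : nat) (F : 'I_n -> 'I_n -> nat -> A) (a c : 'I_n) s z :
  (a <= c)%N -> commz z (Fmat F a c s).
Proof.
move=> ac; rewrite /Fmat ltnNge ac /=.
case: eqP => _; [case: eqP => _; [exact: commz1 | exact: commz0] | exact: commz0].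
Qed.
Lemma Emat_le_comm (K : fieldType) (A : algType K) (n : nat) (E : 'I_n -> 'I_n -> nat -> A) (c b : 'I_n) s z :
  (b <= c)%N -> commz z (Emat E c b s).
Proof.
move=> ac; rewrite /Emat ltnNge ac /=.
case: eqP => _; [case: eqP => _; [exact: commz1 | exact: commz0] | exact: commz0].
Qed.

Lemma gauss_comm (K : fieldType) (A : algType K) (n : nat)
  (X F E : 'I_n -> 'I_n -> nat -> A) (g : 'I_n -> nat -> A) (z : A) (m : nat) :
  gauss_decomp X F g E ->
  (forall c : 'I_n, (c < m)%N -> exists u, u * g c 0%N = 1 /\ g c 0%N * u = 1) ->
  (forall (a b : 'I_n) r, (a < m)%N -> (b < m)%N -> commz z (X a b r)) ->
  forall (k : 'I_n), (k < m)%N ->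
    (forall r, commz z (g k r)) /\
    (forall (a : 'I_n) r, (a < m)%N -> commz z (Fmat F a k r) /\ commz z (Emat E k a r)).
Proof.
move=> hX hg hc.
have key : forall N (k : 'I_n), nat_of_ord k = N -> (k < m)%N ->
    (forall r, commz z (g k r)) /\
    (forall (a : 'I_n) r, (a < m)%N -> commz z (Fmat F a k r) /\ commz z (Emat E k a r)).
  elim/ltn_ind => N IH k kN km.
  have IH' : forall c : 'I_n, (c < k)%N ->
      (forall r, commz z (g c r)) /\
      (forall (a : 'I_n) r, (a < m)%N -> commz z (Fmat F a c r) /\ commz z (Emat E c a r)).
    by move=> c ck; apply: (IH c) => //; [rewrite -kN | apply: ltn_trans ck km].
  have top : forall (a b : 'I_n) r, (a < m)%N -> (b < m)%N -> ((a <= k) || (b <= k))%N ->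
      commz z (gterm F g E a b k r).
    move=> a b r am bm abk.
    have := hc a b r am bm; rewrite hX (bigD1 k) //= => h.
    have hr : commz z (\sum_(c < n | c != k) gterm F g E a b c r).
      apply: commz_sum => c ck; case: (ltngtP c k) => [clt|cgt|ceq].
      - apply: commz_sum => r1 _; apply: commz_sum => r2 _.
        have [h1 h2] := IH' c clt.
        apply: commzM; [apply: commzM|].
        + by have [] := h2 a r1 am.
        + exact: h1.
        + by have [] := h2 b (r - r1 - r2)%N bm.
      - rewrite /gterm big1; first exact: commz0.
        move=> r1 _; apply: big1 => r2 _.
        case/orP: abk => hk.
        + by rewrite Fmat_up ?mul0r ?mul0r //; apply: leq_ltn_trans hk cgt.
        + by rewrite Emat_low ?mulr0 //; apply: leq_ltn_trans hk cgt.
      - by move: ck; rewrite (_ : c = k) ?eqxx //; apply: val_inj.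
    have -> : gterm F g E a b k r =
        (gterm F g E a b k r + \sum_(c < n | c != k) gterm F g E a b c r)
        - \sum_(c < n | c != k) gterm F g E a b c r by rewrite addrK.
    exact: commzB.
  have [u [hu1 hu2]] := hg k km.
  have gc : forall r, commz z (g k r).
    move=> r; have := top k k r km km; rewrite leqnn /= => /(_ isT).
    rewrite /gterm (@sum_diagE _ _ _ _ _ (Emat_diag E k)).
    by rewrite (@sum_delta_l _ _ _ _ (Fmat_diag F k)).
  have g0u : commz z u by apply: (commz_inv hu1 hu2); exact: gc.
  split=> // a r am.
  case: (leqP a k) => ak.
    by split; [apply: Fmat_le_comm | apply: Emat_le_comm].
  elim/ltn_ind: r => r IHr.
  split.
  - have := top a k r am km; rewrite leqnn orbT => /(_ isT).
    rewrite /gterm (@sum_diagE _ _ _ _ _ (Emat_diag E k)) big_nat_recr //= subnn => h.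
    have h2 : commz z (Fmat F a k r * g k 0%N).
      rewrite -(addKr (\sum_(0 <= i < r) Fmat F a k i * g k (r - i)%N) (Fmat F a k r * g k 0%N)).
      apply: commzD; last exact: h.
      apply: commzN; rewrite big_nat; apply: commz_sum => i /andP[_ ir].
      by apply: commzM; [have [] := IHr i ir | exact: gc].
    rewrite -[Fmat F a k r]mulr1 -hu2 mulrA.
    exact: commzM.
  - have := top k a r km am; rewrite leqnn /= => /(_ isT).
    rewrite /gterm (@sum_diagF _ _ _ _ _ (Fmat_diag F k)) big_nat_recl //= subn0 => h.
    have h2 : commz z (g k 0%N * Emat E k a r).
      rewrite -(addrK (\sum_(0 <= i < r) g k i.+1 * Emat E k a (r - i.+1)%N) (g k 0%N * Emat E k a r)).
      apply: commzB; first exact: h.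
      rewrite big_nat; apply: commz_sum => i /andP[_ ir].
      apply: commzM; first exact: gc.
      by have [] := IHr (r - i.+1)%N; first by rewrite subnSK // leq_subr.
    rewrite -[Emat E k a r]mul1r -hu1 -mulrA.
    exact: commzM.
by move=> k; apply: key.
Qed.
Lemma tri_left (K : fieldType) (A : algType K) (n : nat)
  (F : 'I_n -> 'I_n -> nat -> A) (g : 'I_n -> nat -> A) (D : 'I_n -> nat -> A) (m : nat) :
  (forall c : 'I_n, (c < m)%N -> exists u, u * g c 0%N = 1) ->
  (forall (j : 'I_n) r, (j < m)%N ->
     \sum_(c < n) \sum_(0 <= r1 < r.+1) \sum_(0 <= r2 < (r - r1).+1)
        Fmat F j c r1 * g c r2 * D c (r - r1 - r2)%N = 0) ->
  forall (j : 'I_n) r, (j < m)%N -> D j r = 0.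
Proof.
move=> hg hs.
have key : forall r N (j : 'I_n), nat_of_ord j = N -> (j < m)%N -> D j r = 0.
  elim/ltn_ind => r IHr; elim/ltn_ind => N IHN j jN jm.
  have hlow : forall c : 'I_n, (c < j)%N -> forall s, (s <= r)%N -> D c s = 0.
    move=> c cj s; rewrite leq_eqVlt => /orP[/eqP->|sr].
      by apply: (IHN c) => //; [rewrite -jN | apply: ltn_trans cj jm].
    by apply: (IHr s sr c c) => //; apply: ltn_trans cj jm.
  have := hs j r jm; rewrite (bigD1 j) //=.
  have -> : \sum_(c < n | c != j) \sum_(0 <= r1 < r.+1) \sum_(0 <= r2 < (r - r1).+1)
        Fmat F j c r1 * g c r2 * D c (r - r1 - r2)%N = 0.
    apply: big1 => c cj; case: (ltngtP c j) => [clt|cgt|ceq].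
    - apply: big1 => r1 _; apply: big1 => r2 _.
      by rewrite (hlow c clt) ?mulr0 // -subnDA leq_subr.
    - by apply: big1 => r1 _; apply: big1 => r2 _; rewrite Fmat_up // !mul0r.
    - by move: cj; rewrite (_ : c = j) ?eqxx //; apply: val_inj.
  rewrite addr0 (@sum_diagF _ _ _ _ _ (Fmat_diag F j)) big_nat_recl // subn0.
  have -> : \sum_(0 <= i < r) g j i.+1 * D j (r - i.+1)%N = 0.
    rewrite big_nat; apply: big1 => i /andP[_ ir].
    rewrite (IHr (r - i.+1)%N _ j j) ?mulr0 //.
    by rewrite subnSK // leq_subr.
  rewrite addr0 => h.
  have [u hu] := hg j jm.
  by rewrite -[D j r]mul1r -hu -mulrA h mulr0.
by move=> j r jm; apply: (key r j j).
Qed.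

Lemma tri_right (K : fieldType) (A : algType K) (n : nat)
  (E : 'I_n -> 'I_n -> nat -> A) (g : 'I_n -> nat -> A) (D : 'I_n -> nat -> A) (m : nat) :
  (forall c : 'I_n, (c < m)%N -> exists u, g c 0%N * u = 1) ->
  (forall (j : 'I_n) r, (j < m)%N ->
     \sum_(c < n) \sum_(0 <= r1 < r.+1) \sum_(0 <= r2 < (r - r1).+1)
        D c r1 * g c r2 * Emat E c j (r - r1 - r2)%N = 0) ->
  forall (j : 'I_n) r, (j < m)%N -> D j r = 0.
Proof.
move=> hg hs.
have key : forall r N (j : 'I_n), nat_of_ord j = N -> (j < m)%N -> D j r = 0.
  elim/ltn_ind => r IHr; elim/ltn_ind => N IHN j jN jm.
  have hlow : forall c : 'I_n, (c < j)%N -> forall s, (s <= r)%N -> D c s = 0.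
    move=> c cj s; rewrite leq_eqVlt => /orP[/eqP->|sr].
      by apply: (IHN c) => //; [rewrite -jN | apply: ltn_trans cj jm].
    by apply: (IHr s sr c c) => //; apply: ltn_trans cj jm.
  have := hs j r jm; rewrite (bigD1 j) //=.
  have -> : \sum_(c < n | c != j) \sum_(0 <= r1 < r.+1) \sum_(0 <= r2 < (r - r1).+1)
        D c r1 * g c r2 * Emat E c j (r - r1 - r2)%N = 0.
    apply: big1 => c cj; case: (ltngtP c j) => [clt|cgt|ceq].
    - rewrite big_nat; apply: big1 => r1 /andP[_ r1r]; apply: big1 => r2 _.
      by rewrite (hlow c clt) ?mul0r.
    - by apply: big1 => r1 _; apply: big1 => r2 _; rewrite Emat_low // !mulr0.
    - by move: cj; rewrite (_ : c = j) ?eqxx //; apply: val_inj.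
  rewrite addr0 (@sum_diagE _ _ _ _ _ (Emat_diag E j)) big_nat_recr //= subnn.
  have -> : \sum_(0 <= i < r) D j i * g j (r - i)%N = 0.
    rewrite big_nat; apply: big1 => i /andP[_ ir].
    by rewrite (IHr i ir j j) ?mul0r.
  rewrite add0r => h.
  have [u hu] := hg j jm.
  by rewrite -[D j r]mulr1 -hu mulrA h mul0r.
by move=> j r jm; apply: (key r j j).
Qed.
Lemma sum_pick (R : nmodType) (n : nat) (k : 'I_n) (x : R) :
  \sum_(c < n) (if c == k then x else 0) = x.
Proof. by rewrite -big_mkcond big_pred1_eq. Qed.

Lemma coef2_pt (K : fieldType) (A : algType K) (n : nat) (v : K) (G : 'I_n -> 'I_n -> A) (a b c d : 'I_n) :
  (Rtrig_coef v a b c d).2 *: G c d =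
  (if d == b then (if c == a then (if a == b then - v^-1 else -1) *: G a b else 0) else 0)
  + (if d == a then (if c == b then (if (b < a)%N then (v - v^-1) *: G b a else 0) else 0) else 0).
Proof.
rewrite /Rtrig_coef.
have [<-|ac] := eqVneq a c; have [<-|bd] := eqVneq b d; rewrite ?eqxx /=.
- by have [<-|ab] := eqVneq a b; rewrite ?eqxx ?ltnn ?addr0.
- have [ead|ad] := eqVneq a d.
  + subst d; rewrite ?eqxx /= ?add0r.
    by rewrite (negbTE bd) (eq_sym a b) (negbTE bd) /= scale0r.
  + by rewrite /= scale0r addr0.
- have [eab|ab] := eqVneq a b; rewrite /= ?add0r.
  + subst b; rewrite ?eqxx ?(negbTE ac) /= ?scale0r.
    by rewrite ltnn; case: (c == a).
  + by rewrite scale0r.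
- have [ead|ad] := eqVneq a d.
  + subst d; rewrite ?eqxx /= ?add0r.
    have [ebc|bc] := eqVneq b c.
    * subst c; rewrite ?eqxx /=.
      case: ltngtP => [ab|ba|eab].
      - by rewrite scale0r.
      - by [].
      - by move: ac; rewrite (_ : a = b) ?eqxx //; apply: val_inj.
    * by rewrite scale0r.
  + by rewrite /= scale0r addr0.
Qed.



Lemma coef2_pt' (K : fieldType) (A : algType K) (n : nat) (v : K) (G : 'I_n -> 'I_n -> A) (p q c d : 'I_n) :
  (Rtrig_coef v c d p q).2 *: G c d =
  (if d == q then (if c == p then (if p == q then - v^-1 else -1) *: G p q else 0) else 0)
  + (if d == p then (if c == q then (if (p < q)%N then (v - v^-1) *: G q p else 0) else 0) else 0).
Proof.
rewrite /Rtrig_coef.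
have [ecp|cp] := eqVneq c p; have [edq|dq] := eqVneq d q.
- subst p q; rewrite ?eqxx /=.
  by have [<-|ab] := eqVneq c d; rewrite ?eqxx ?ltnn ?addr0.
- subst p; rewrite ?eqxx /= ?add0r.
  have [ecq|cq] := eqVneq c q.
  + subst q; by rewrite ?(negbTE dq) ?andbF /= scale0r.
  + by rewrite ?(negbTE cq) /= scale0r; case: (d == c).
- subst q; rewrite /= add0r.
  have [ecd|cd] := eqVneq c d.
  + subst c; by rewrite ?(negbTE cp) /= ?andbF scale0r.
  + by rewrite ?(negbTE cd) /= scale0r; case: (d == p).
- rewrite /= add0r.
  have [ecq|cq] := eqVneq c q; have [edp|dp] := eqVneq d p.
  + subst c d; rewrite /=.
    case: ltngtP => [ab|ba|eab].
    * by rewrite ?scale0r.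
    * by rewrite ?scale0r.
    * by move: cp; rewrite (_ : q = p) ?eqxx //; apply: val_inj.
  + by rewrite /= scale0r.
  + by rewrite /= scale0r.
  + by rewrite /= scale0r.
Qed.


Lemma coef2_sum (K : fieldType) (A : algType K) (n : nat) (v : K) (G : 'I_n -> 'I_n -> A) (a b : 'I_n) :
  \sum_(c < n) \sum_(d < n) (Rtrig_coef v a b c d).2 *: G c d =
  (if a == b then - v^-1 else -1) *: G a b + (if (b < a)%N then (v - v^-1) *: G b a else 0).
Proof.
rewrite (eq_bigr (fun c => (if c == a then (if a == b then - v^-1 else -1) *: G a b else 0)
   + (if c == b then (if (b < a)%N then (v - v^-1) *: G b a else 0) else 0))).
  by rewrite big_split /= !sum_pick.
move=> c _; rewrite (eq_bigr (fun d =>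
  (if d == b then (if c == a then (if a == b then - v^-1 else -1) *: G a b else 0) else 0)
  + (if d == a then (if c == b then (if (b < a)%N then (v - v^-1) *: G b a else 0) else 0) else 0))).
  by rewrite big_split /= !sum_pick.
by move=> d _; rewrite coef2_pt.
Qed.

Lemma coef2_sum' (K : fieldType) (A : algType K) (n : nat) (v : K) (G : 'I_n -> 'I_n -> A) (p q : 'I_n) :
  \sum_(c < n) \sum_(d < n) (Rtrig_coef v c d p q).2 *: G c d =
  (if p == q then - v^-1 else -1) *: G p q + (if (p < q)%N then (v - v^-1) *: G q p else 0).
Proof.
rewrite (eq_bigr (fun c => (if c == p then (if p == q then - v^-1 else -1) *: G p q else 0)
   + (if c == q then (if (p < q)%N then (v - v^-1) *: G q p else 0) else 0))).
  by rewrite big_split /= !sum_pick.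
move=> c _; rewrite (eq_bigr (fun d =>
  (if d == q then (if c == p then (if p == q then - v^-1 else -1) *: G p q else 0) else 0)
  + (if d == p then (if c == q then (if (p < q)%N then (v - v^-1) *: G q p else 0) else 0) else 0))).
  by rewrite big_split /= !sum_pick.
by move=> d _; rewrite coef2_pt'.
Qed.
Definition rel2 (K : fieldType) (A : algType K) (n : nat) (v : K) (X Y : 'I_n -> 'I_n -> A) : Prop :=
  forall a b p q : 'I_n,
  \sum_(c < n) \sum_(d < n) (Rtrig_coef v a b c d).2 *: (X c p * Y d q)
  = \sum_(c < n) \sum_(d < n) (Rtrig_coef v c d p q).2 *: (Y b d * X a c).

Lemma rel2_collapse (K : fieldType) (A : algType K) (n : nat) (v : K) (X Y : 'I_n -> 'I_n -> A) :
  rel2 v X Y -> forall a b p q : 'I_n,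
  (if a == b then - v^-1 else -1) *: (X a p * Y b q)
    + (if (b < a)%N then (v - v^-1) *: (X b p * Y a q) else 0)
  = (if p == q then - v^-1 else -1) *: (Y b q * X a p)
    + (if (p < q)%N then (v - v^-1) *: (Y b p * X a q) else 0).
Proof.
move=> H a b p q; have := H a b p q.
rewrite (@coef2_sum _ _ _ v (fun c d => X c p * Y d q)).
by rewrite (@coef2_sum' _ _ _ v (fun c d => Y b d * X a c)).
Qed.

Lemma ser_plusN (K : fieldType) (A : algType K) (n : nat) (tp : 'I_n -> 'I_n -> nat -> A) c p (r : nat) :
  ser_plus tp c p (- (r%:Z)) = tp c p r.
Proof. by rewrite /ser_plus oppr_le0 le0z_nat abszN absz_nat. Qed.
Lemma ser_minusP (K : fieldType) (A : algType K) (n : nat) (tm : 'I_n -> 'I_n -> nat -> A) c p (r : nat) :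
  ser_minus tm c p (r%:Z) = tm c p r.
Proof. by rewrite /ser_minus le0z_nat absz_nat. Qed.

Lemma rtt_e (K : fieldType) (A : algType K) (n : nat) (v : K) (T1 : 'I_n -> 'I_n -> int -> A)
  (tp : 'I_n -> 'I_n -> nat -> A) :
  RTT_rel v T1 (ser_plus tp) -> forall k, rel2 v (fun c p => T1 c p k) (fun d q => tp d q 0%N).
Proof.
move=> H k a b p q; have := H a b p q k 1.
have e1 : forall d q, ser_plus tp d q 1 = 0 by [].
have e2 : forall d q, ser_plus tp d q (1 - 1) = tp d q 0%N by move=> d q0; rewrite subrr.
under eq_bigr => c _ do under eq_bigr => d _ do rewrite e1 e2 mulr0 scaler0 add0r.
by under [RHS]eq_bigr => c _ do under eq_bigr => d _ do rewrite e1 e2 mul0r scaler0 add0r.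
Qed.

Lemma rtt_f (K : fieldType) (A : algType K) (n : nat) (v : K) (T2 : 'I_n -> 'I_n -> int -> A)
  (tm : 'I_n -> 'I_n -> nat -> A) :
  RTT_rel v (ser_minus tm) T2 -> forall l, rel2 v (fun c p => tm c p 0%N) (fun d q => T2 d q l).
Proof.
move=> H l a b p q; have := H a b p q 0 (l + 1).
have e1 : forall c p, ser_minus tm c p (0 - 1) = 0 by [].
have e2 : forall c p, ser_minus tm c p 0 = tm c p 0%N by [].
have e3 : forall d q, T2 d q (l + 1 - 1) = T2 d q l by move=> d q0; rewrite addrK.
under eq_bigr => c _ do under eq_bigr => d _ do rewrite e1 e2 e3 mul0r scaler0 add0r.
by under [RHS]eq_bigr => c _ do under eq_bigr => d _ do rewrite e1 e2 e3 mulr0 scaler0 add0r.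
Qed.
Lemma ord_neq (n : nat) (a b : 'I_n) : (a < b)%N -> (a == b) = false.
Proof. by move=> ab; apply/negbTE/eqP => e; rewrite e ltnn in ab. Qed.
Lemma ord_neq' (n : nat) (a b : 'I_n) : (a < b)%N -> (b == a) = false.
Proof. by move=> ab; rewrite eq_sym ord_neq. Qed.
Lemma ltn_flip (a b : nat) : (a < b)%N -> (b < a)%N = false.
Proof. by move=> ab; rewrite ltnNge ltnW. Qed.

Lemma e_rels (K : fieldType) (A : algType K) (n : nat) (v : K) (X t0 : 'I_n -> 'I_n -> A) (i i1 : 'I_n) :
  rel2 v X t0 -> nat_of_ord i1 = (nat_of_ord i).+1 -> (forall x y : 'I_n, (y < x)%N -> t0 x y = 0) ->
  [/\ forall a p : 'I_n, (a < i)%N -> (p < i)%N -> X a p * t0 i i = t0 i i * X a p,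
      forall a p : 'I_n, (a < i)%N -> (p < i)%N -> X a p * t0 i i1 = t0 i i1 * X a p,
      forall a : 'I_n, (a < i)%N -> X a i * t0 i i = v^-1 *: (t0 i i * X a i) &
      forall a : 'I_n, (a < i)%N -> (v - v^-1) *: (t0 i i * X a i1) = t0 i i1 * X a i - X a i * t0 i i1].
Proof.
move=> H Hi1 ht; have h := rel2_collapse H.
have ii1 : (i < i1)%N by rewrite Hi1.
split.
- move=> a p ai pi; have := h a i p i.
  rewrite (ord_neq ai) (ltn_flip ai) (ord_neq pi) pi (ht i p pi) /= mul0r scaler0 !addr0.
  by rewrite !scaleN1r => /oppr_inj.
- move=> a p ai pi; have := h a i p i1.
  have pi1 : (p < i1)%N by rewrite Hi1 ltnS ltnW.
  rewrite (ord_neq ai) (ltn_flip ai) (ord_neq pi1) pi1 (ht i p pi) /= mul0r scaler0 !addr0.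
  by rewrite !scaleN1r => /oppr_inj.
- move=> a ai; have := h a i i i.
  rewrite (ord_neq ai) (ltn_flip ai) eqxx ltnn /= !addr0.
  by rewrite scaleN1r scaleNr => /oppr_inj.
- move=> a ai; have := h a i i i1.
  rewrite (ord_neq ai) (ltn_flip ai) (ord_neq ii1) ii1 /= addr0 !scaleN1r => e.
  by apply: (addrI (- (t0 i i1 * X a i))); rewrite -e addKr.
Qed.

Lemma f_rels (K : fieldType) (A : algType K) (n : nat) (v : K) (s Y : 'I_n -> 'I_n -> A) (i i1 : 'I_n) :
  rel2 v s Y -> nat_of_ord i1 = (nat_of_ord i).+1 -> (forall x y : 'I_n, (x < y)%N -> s x y = 0) ->
  [/\ forall b q : 'I_n, (b < i)%N -> (q < i)%N -> Y b q * s i i = s i i * Y b q,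
      forall b q : 'I_n, (b < i)%N -> (q < i)%N -> Y b q * s i1 i = s i1 i * Y b q,
      forall q : 'I_n, (q < i)%N -> Y i q * s i i = v^-1 *: (s i i * Y i q),
      forall q : 'I_n, (q < i)%N -> Y i1 q * s i i = s i i * Y i1 q &
      forall q : 'I_n, (q < i)%N -> (v - v^-1) *: (s i i * Y i1 q) = s i1 i * Y i q - Y i q * s i1 i].
Proof.
move=> H Hi1 hs; have h := rel2_collapse H.
have ii1 : (i < i1)%N by rewrite Hi1.
split.
- move=> b q bi qi; have := h i b i q.
  rewrite (ord_neq' bi) bi (hs b i bi) (ord_neq' qi) (ltn_flip qi) /= mul0r scaler0 !addr0.
  by rewrite !scaleN1r => /oppr_inj.
- move=> b q bi qi; have := h i1 b i q.
  have bi1 : (b < i1)%N by rewrite Hi1 ltnS ltnW.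
  rewrite (ord_neq' bi1) bi1 (hs b i bi) (ord_neq' qi) (ltn_flip qi) /= mul0r scaler0 !addr0.
  by rewrite !scaleN1r => /oppr_inj.
- move=> q qi; have := h i i i q.
  rewrite eqxx ltnn (ord_neq' qi) (ltn_flip qi) /= !addr0.
  by rewrite scaleN1r scaleNr => /oppr_inj /esym.
- move=> q qi; have := h i i1 i q.
  rewrite (ord_neq ii1) (ltn_flip ii1) (ord_neq' qi) (ltn_flip qi) /= !addr0.
  by rewrite !scaleN1r => /oppr_inj.
- move=> q qi; have := h i1 i i q.
  rewrite (ord_neq' ii1) ii1 (ord_neq' qi) (ltn_flip qi) /= addr0 !scaleN1r => e.
  by apply: (addrI (- (s i1 i * Y i q))); rewrite e addKr.
Qed.
Lemma gauss0 (K : fieldType) (A : algType K) (n : nat) (t f e : 'I_n -> 'I_n -> nat -> A)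
  (g : 'I_n -> nat -> A) (a b : 'I_n) :
  gauss_decomp t f g e -> t a b 0%N = \sum_(c < n) Fmat f a c 0 * g c 0%N * Emat e c b 0.
Proof. by move=> H; rewrite H; apply: eq_bigr => c _; rewrite big_nat1 big_nat1. Qed.

Lemma gauss0_plus (K : fieldType) (A : algType K) (n : nat) (t f e : 'I_n -> 'I_n -> nat -> A)
  (g : 'I_n -> nat -> A) (a b : 'I_n) :
  gauss_decomp t f g e -> (forall x y, f x y 0%N = 0) -> t a b 0%N = g a 0%N * Emat e a b 0.
Proof.
move=> H hf; rewrite (gauss0 _ _ H).
rewrite (eq_bigr (fun c => if c == a then g a 0%N * Emat e a b 0 else 0)) ?sum_pick //.
move=> c _; rewrite /Fmat hf.
case: ifP => [ca|_]; first by rewrite ?(ord_neq' ca) ?(ord_neq ca) !mul0r.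
by rewrite eq_sym; case: eqP => [->|_]; rewrite ?mul1r ?mul0r.
Qed.

Lemma gauss0_minus (K : fieldType) (A : algType K) (n : nat) (t f e : 'I_n -> 'I_n -> nat -> A)
  (g : 'I_n -> nat -> A) (a b : 'I_n) :
  gauss_decomp t f g e -> (forall x y, e x y 0%N = 0) -> t a b 0%N = Fmat f a b 0 * g b 0%N.
Proof.
move=> H he; rewrite (gauss0 _ _ H).
rewrite (eq_bigr (fun c => if c == b then Fmat f a b 0 * g b 0%N else 0)) ?sum_pick //.
move=> c _; rewrite /Emat he.
case: ifP => [cb|_]; first by rewrite (ord_neq cb) !mulr0.
by case: eqP => [->|_]; rewrite ?mulr1 ?mulr0.
Qed.

Lemma rel2_ext (K : fieldType) (A : algType K) (n : nat) (v : K) (X Y X' Y' : 'I_n -> 'I_n -> A) :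
  rel2 v X Y -> (forall a b, X a b = X' a b) -> (forall a b, Y a b = Y' a b) -> rel2 v X' Y'.
Proof.
move=> H eX eY a b p q; have := H a b p q.
under eq_bigr => c _ do under eq_bigr => d _ do rewrite eX eY.
by under [in X in _ = X -> _]eq_bigr => c _ do under eq_bigr => d _ do rewrite eX eY.
Qed.

Lemma sumL (K : fieldType) (A : algType K) (I : Type) (s : seq I) (P : pred I) (Y Z : I -> A)
  (e0 : A) (w k : K) :
  \sum_(x <- s | P x) (e0 * Y x - w *: (Y x * e0) - k *: Z x)
  = e0 * (\sum_(x <- s | P x) Y x) - w *: ((\sum_(x <- s | P x) Y x) * e0)
    - k *: (\sum_(x <- s | P x) Z x).
Proof. by rewrite !sumrB mulr_sumr mulr_suml !scaler_sumr. Qed.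

Lemma sumL' (K : fieldType) (A : algType K) (I : Type) (s : seq I) (P : pred I) (Y Z : I -> A)
  (e0 : A) (w k : K) :
  \sum_(x <- s | P x) (Y x * e0 - w *: (e0 * Y x) - k *: Z x)
  = (\sum_(x <- s | P x) Y x) * e0 - w *: (e0 * (\sum_(x <- s | P x) Y x))
    - k *: (\sum_(x <- s | P x) Z x).
Proof. by rewrite !sumrB mulr_sumr mulr_suml !scaler_sumr. Qed.
Lemma e_part (K : fieldType) (A : algType K) (n : nat) (v : K)
  (X F E : 'I_n -> 'I_n -> nat -> A) (g : 'I_n -> nat -> A) (t0 : 'I_n -> 'I_n -> A) (d' : A)
  (i j i1 : 'I_n) :
  v - v^-1 != 0 ->
  gauss_decomp X F g E ->
  (forall c : 'I_n, exists u, u * g c 0%N = 1 /\ g c 0%N * u = 1) ->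
  (forall r, rel2 v (fun a p => X a p r) t0) ->
  (forall x y : 'I_n, (y < x)%N -> t0 x y = 0) ->
  d' * t0 i i = 1 -> t0 i i * d' = 1 ->
  (j < i)%N -> nat_of_ord i1 = (nat_of_ord i).+1 ->
  forall r, E j i1 r = (v - v^-1)^-1 *: ((d' * t0 i i1) * E j i r - v^-1 *: (E j i r * (d' * t0 i i1))).
Proof.
move=> hk HX hg Hrel ht hd1 hd2 ji Hi1.
have v0 : v != 0 by apply: contraNneq hk => ->; rewrite invr0 subrr.
have ii1 : (i < i1)%N by rewrite Hi1.
set e0 := d' * t0 i i1.
have hc : forall (a p : 'I_n) r, (a < i)%N -> (p < i)%N -> commz e0 (X a p r).
  move=> a p r ai pi; have [h1 h2 _ _] := e_rels (Hrel r) Hi1 ht.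
  have hd : X a p r * d' = d' * X a p r.
    by rewrite -[X a p r * d']mul1r -hd1 -mulrA (mulrA (t0 i i)) -h1 // !mulrA -mulrA hd2 mulr1.
  by rewrite /commz /e0 mulrA hd -mulrA h2 // mulrA.
have hL : forall (a : 'I_n) r, (a < i)%N ->
    e0 * X a i r - v^-1 *: (X a i r * e0) - (v - v^-1) *: X a i1 r = 0.
  move=> a r ai; have [_ _ h3 h4] := e_rels (Hrel r) Hi1 ht.
  have hd : X a i r * d' = v *: (d' * X a i r).
    have : d' * (X a i r * t0 i i) * d' = d' * (v^-1 *: (t0 i i * X a i r)) * d' by rewrite h3.
    rewrite -scalerAr -scalerAl !mulrA hd1 mul1r -!mulrA hd2 mulr1 => ->.
    by rewrite scalerA mulfV // scale1r.
  rewrite /e0 mulrA hd -scalerAl scalerA mulVf // scale1r -!mulrA -mulrBr.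
  rewrite -h4 // scalerAr mulrA hd1 mul1r subrr //.
clearbody e0.
have gc := gauss_comm HX (fun c _ => hg c) hc.
have termE : forall (j' c : 'I_n) r1 r2 s, (j' < i)%N ->
    Fmat F j' c r1 * g c r2 *
      (e0 * Emat E c i s - v^-1 *: (Emat E c i s * e0) - (v - v^-1) *: Emat E c i1 s)
    = e0 * (Fmat F j' c r1 * g c r2 * Emat E c i s)
      - v^-1 *: (Fmat F j' c r1 * g c r2 * Emat E c i s * e0)
      - (v - v^-1) *: (Fmat F j' c r1 * g c r2 * Emat E c i1 s).
  move=> j' c r1 r2 s j'i.
  case: (ltnP c i) => ci.
    have [g1 g2] := gc c ci.
    have hP : commz e0 (Fmat F j' c r1 * g c r2).
      by apply: commzM; [have [] := g2 j' r1 j'i | exact: g1].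
    rewrite !mulrBr -!scalerAr !mulrA hP.
    by rewrite !mulrA.
  by rewrite Fmat_up ?(leq_trans j'i ci) // !mul0r !mulr0 !scaler0 !subrr.
have HD : forall (j' : 'I_n) r, (j' < i)%N ->
    \sum_(c < n) \sum_(0 <= r1 < r.+1) \sum_(0 <= r2 < (r - r1).+1)
      Fmat F j' c r1 * g c r2 *
      (e0 * Emat E c i (r - r1 - r2)%N - v^-1 *: (Emat E c i (r - r1 - r2)%N * e0)
       - (v - v^-1) *: Emat E c i1 (r - r1 - r2)%N) = 0.
  move=> j' r j'i.
  under eq_bigr => c _ do under eq_bigr => r1 _ do under eq_bigr => r2 _ do rewrite (termE j' c r1 r2 _ j'i).
  under eq_bigr => c _ do under eq_bigr => r1 _ do rewrite sumL.
  under eq_bigr => c _ do rewrite sumL.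
  by rewrite sumL -(HX j' i r) -(HX j' i1 r) hL.
have key := @tri_left _ _ _ F g
  (fun c s => e0 * Emat E c i s - v^-1 *: (Emat E c i s * e0) - (v - v^-1) *: Emat E c i1 s) i
  (fun c _ => let: ex_intro u (conj h _) := hg c in ex_intro _ u h) HD.
move=> r; have := key j r ji.
rewrite /Emat ji (ltn_trans ji ii1) => /eqP.
rewrite subr_eq0 => /eqP ->.
by rewrite scalerA mulVf // scale1r.
Qed.
Lemma f_part (K : fieldType) (A : algType K) (n : nat) (v : K)
  (X F E : 'I_n -> 'I_n -> nat -> A) (g : 'I_n -> nat -> A) (s : 'I_n -> 'I_n -> A) (sg : A)
  (i j i1 : 'I_n) :
  v - v^-1 != 0 ->
  gauss_decomp X F g E ->
  (forall c : 'I_n, exists u, u * g c 0%N = 1 /\ g c 0%N * u = 1) ->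
  (forall r, rel2 v s (fun a p => X a p r)) ->
  (forall x y : 'I_n, (x < y)%N -> s x y = 0) ->
  sg * s i i = 1 -> s i i * sg = 1 ->
  (j < i)%N -> nat_of_ord i1 = (nat_of_ord i).+1 ->
  forall r, F i1 j r = (v^-1 - v)^-1 *: (F i j r * (s i1 i * sg) - v *: ((s i1 i * sg) * F i j r)).
Proof.
move=> hk HX hg Hrel hs hd1 hd2 ji Hi1.
have v0 : v != 0 by apply: contraNneq hk => ->; rewrite invr0 subrr.
have hk' : v^-1 - v != 0 by rewrite -opprB oppr_eq0.
have ii1 : (i < i1)%N by rewrite Hi1.
set f0 := s i1 i * sg.
have hσ : forall Y : A, Y * s i i = s i i * Y -> Y * sg = sg * Y.
  move=> Y h1.
  by rewrite -[Y * sg]mul1r -hd1 -mulrA (mulrA (s i i)) -h1 !mulrA -mulrA hd2 mulr1.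
have hc : forall (b q : 'I_n) r, (b < i)%N -> (q < i)%N -> commz f0 (X b q r).
  move=> b q r bi qi; have [h1 h2 _ _ _] := f_rels (Hrel r) Hi1 hs.
  by rewrite /commz /f0 mulrA h2 // -mulrA (hσ _ (h1 b q bi qi)) mulrA.
have hL : forall (q : 'I_n) r, (q < i)%N ->
    X i q r * f0 - v *: (f0 * X i q r) - (v^-1 - v) *: X i1 q r = 0.
  move=> q r qi; have [_ _ h3 h4 h5] := f_rels (Hrel r) Hi1 hs.
  have hσ3 : sg * X i q r = v^-1 *: (X i q r * sg).
    have : sg * (X i q r * s i i) * sg = sg * (v^-1 *: (s i i * X i q r)) * sg by rewrite h3.
    by rewrite -scalerAr -scalerAl !mulrA hd1 mul1r -!mulrA hd2 mulr1.
  have hσ4 : X i1 q r * sg = sg * X i1 q r by apply: hσ; rewrite h4.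
  rewrite /f0 -mulrA hσ3 -scalerAr scalerA mulfV // scale1r mulrA (mulrA (s i1 i)) -mulrBl.
  have -> : X i q r * s i1 i - s i1 i * X i q r = - ((v - v^-1) *: (s i i * X i1 q r)).
    by rewrite h5 // opprB.
  rewrite mulNr -scalerAl -mulrA hσ4 mulrA hd2 mul1r.
  by rewrite -scaleNr -scalerBl opprB subrr scale0r.
clearbody f0.
have gc := gauss_comm HX (fun c _ => hg c) hc.
have termE : forall (j' c : 'I_n) r1 r2 s', (j' < i)%N ->
    (Fmat F i c r1 * f0 - v *: (f0 * Fmat F i c r1) - (v^-1 - v) *: Fmat F i1 c r1)
      * g c r2 * Emat E c j' s'
    = Fmat F i c r1 * g c r2 * Emat E c j' s' * f0
      - v *: (f0 * (Fmat F i c r1 * g c r2 * Emat E c j' s'))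
      - (v^-1 - v) *: (Fmat F i1 c r1 * g c r2 * Emat E c j' s').
  move=> j' c r1 r2 s' j'i.
  case: (ltnP c i) => ci.
    have [g1 g2] := gc c ci.
    have hQ : commz f0 (g c r2 * Emat E c j' s').
      by apply: commzM; [exact: g1 | have [] := g2 j' s' j'i].
    rewrite -mulrA !mulrBl -!scalerAl -(mulrA (Fmat F i c r1) f0) -hQ.
    by rewrite !mulrA.
  by rewrite Emat_low ?(leq_trans j'i ci) // !mulr0 ?mul0r ?scaler0 ?subrr.
have HD : forall (j' : 'I_n) r, (j' < i)%N ->
    \sum_(c < n) \sum_(0 <= r1 < r.+1) \sum_(0 <= r2 < (r - r1).+1)
      (Fmat F i c r1 * f0 - v *: (f0 * Fmat F i c r1) - (v^-1 - v) *: Fmat F i1 c r1)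
      * g c r2 * Emat E c j' (r - r1 - r2)%N = 0.
  move=> j' r j'i.
  under eq_bigr => c _ do under eq_bigr => r1 _ do under eq_bigr => r2 _ do rewrite (termE j' c r1 r2 _ j'i).
  under eq_bigr => c _ do under eq_bigr => r1 _ do rewrite sumL'.
  under eq_bigr => c _ do rewrite sumL'.
  by rewrite sumL' -(HX i j' r) -(HX i1 j' r) hL.
have key := @tri_right _ _ _ E g
  (fun c s => Fmat F i c s * f0 - v *: (f0 * Fmat F i c s) - (v^-1 - v) *: Fmat F i1 c s) i
  (fun c _ => let: ex_intro u (conj _ h) := hg c in ex_intro _ u h) HD.
move=> r; have := key j r ji.
rewrite /Fmat ji (ltn_trans ji ii1) => /eqP.
rewrite subr_eq0 => /eqP ->.
by rewrite scalerA mulVf // scale1r.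
Qed.
Unset Implicit Arguments. Set Strict Implicit.
Lemma vq_k : vq - vq^-1 != 0.
Proof.
have v0 : vq != 0 by rewrite /vq tofrac_eq0 polyX_eq0.
apply/eqP => h.
have hv : vq * vq = 1 by move/subr0_eq: h => h; rewrite {1}h mulVf.
move: hv; rewrite /vq -rmorphM -tofrac1 => /eqP; rewrite tofrac_eq => /eqP.
move/(congr1 (fun p : {poly Cnum} => p`_0)); rewrite coefMX coef1 /= => /eqP.
by rewrite eq_sym oner_eq0.
Qed.

Theorem proposition3p21 (A : algType Cv) (n : nat)
    (tp tm : 'I_n -> 'I_n -> nat -> A)
    (fp fm : 'I_n -> 'I_n -> nat -> A) (gp gm : 'I_n -> nat -> A)
    (ep em : 'I_n -> 'I_n -> nat -> A) :
  rtt_relations vq tp tm ->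
  gauss_decomp tp fp gp ep ->
  gauss_decomp tm fm gm em ->
  (* f^+_{ij}(z) = sum_{r>0} f^{(r)} z^{-r} : no constant term *)
  (forall i j : 'I_n, fp i j 0%N = 0) ->
  (* e^-_{ij}(z) = sum_{r<0} e^{(r)} z^{-r} : no constant term *)
  (forall i j : 'I_n, em i j 0%N = 0) ->
  forall (i j i1 : 'I_n), (j < i)%N -> val i1 = (val i).+1 ->
  (forall r : nat,
     ep j i1 r = (vq - vq^-1)^-1 *: (ep i i1 0%N * ep j i r - vq^-1 *: (ep j i r * ep i i1 0%N))
  /\ em j i1 r = (vq - vq^-1)^-1 *: (ep i i1 0%N * em j i r - vq^-1 *: (em j i r * ep i i1 0%N))
  /\ fp i1 j r = (vq^-1 - vq)^-1 *: (fp i j r * fm i1 i 0%N - vq *: (fm i1 i 0%N * fp i j r))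
  /\ fm i1 j r = (vq^-1 - vq)^-1 *: (fm i j r * fm i1 i 0%N - vq *: (fm i1 i 0%N * fm i j r))).
Proof.
move=> [Hinv Htri Hpp Hmm Hmp] Hgp Hgm Hfp0 Hem0 i j i1 ji Hi1 r.
have hk := vq_k.
have ii1 : (i < i1)%N by rewrite Hi1.
have gp0 : forall c, gp c 0%N = tp c c 0%N.
  by move=> c; rewrite (@gauss0_plus _ _ _ _ _ _ _ c c Hgp Hfp0) Emat_diag mulr1.
have gm0 : forall c, gm c 0%N = tm c c 0%N.
  by move=> c; rewrite (@gauss0_minus _ _ _ _ _ _ _ c c Hgm Hem0) Fmat_diag mul1r.
have hgp : forall c : 'I_n, exists u, u * gp c 0%N = 1 /\ gp c 0%N * u = 1.
  by move=> c; exists (tm c c 0%N); rewrite gp0; have [h1 h2] := Hinv c.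
have hgm : forall c : 'I_n, exists u, u * gm c 0%N = 1 /\ gm c 0%N * u = 1.
  by move=> c; exists (tp c c 0%N); rewrite gm0; have [h1 h2] := Hinv c.
have tlow : forall x y : 'I_n, (y < x)%N -> tp x y 0%N = 0 := fun x y h => (Htri x y h).1.
have slow : forall x y : 'I_n, (x < y)%N -> tm x y 0%N = 0 := fun x y h => (Htri y x h).2.
have e0E : ep i i1 0%N = tm i i 0%N * tp i i1 0%N.
  by rewrite (@gauss0_plus _ _ _ _ _ _ _ i i1 Hgp Hfp0) gp0 mulrA (Hinv i).2 mul1r /Emat ii1.
have f0E : fm i1 i 0%N = tm i1 i 0%N * tp i i 0%N.
  by rewrite (@gauss0_minus _ _ _ _ _ _ _ i1 i Hgm Hem0) gm0 -mulrA (Hinv i).2 mulr1 /Fmat ii1.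
have Rep : forall r, rel2 vq (fun a p => tp a p r) (fun d q => tp d q 0%N) :=
  fun r => rel2_ext (rtt_e Hpp (- r%:Z)) (fun a b => ser_plusN tp a b r) (fun _ _ => erefl).
have Rem : forall r, rel2 vq (fun a p => tm a p r) (fun d q => tp d q 0%N) :=
  fun r => rel2_ext (rtt_e Hmp (r%:Z)) (fun a b => ser_minusP tm a b r) (fun _ _ => erefl).
have Rfp : forall r, rel2 vq (fun c p => tm c p 0%N) (fun a p => tp a p r) :=
  fun r => rel2_ext (rtt_f Hmp (- r%:Z)) (fun _ _ => erefl) (fun a b => ser_plusN tp a b r).
have Rfm : forall r, rel2 vq (fun c p => tm c p 0%N) (fun a p => tm a p r) :=
  fun r => rel2_ext (rtt_f Hmm (r%:Z)) (fun _ _ => erefl) (fun a b => ser_minusP tm a b r).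
split; [|split; [|split]].
- rewrite e0E; exact: (e_part hk Hgp hgp Rep tlow (Hinv i).2 (Hinv i).1 ji Hi1 r).
- rewrite e0E; exact: (e_part hk Hgm hgm Rem tlow (Hinv i).2 (Hinv i).1 ji Hi1 r).
- rewrite f0E; exact: (f_part hk Hgp hgp Rfp slow (Hinv i).1 (Hinv i).2 ji Hi1 r).
- rewrite f0E; exact: (f_part hk Hgm hgm Rfm slow (Hinv i).1 (Hinv i).2 ji Hi1 r).
Qed.
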